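(* Suppose the bornology of a large scale group $G$ has a countable basis. If $G$ is unbounded and locally bounded, then $G$ has infinitely many ends.
   Context: A large scale group is a group $G$ with a bornology $\mathcal B$ (a cover of $G$ closed under subsets and finite unions) closed under inverses and products; uniformly bounded covers are those refining $\{gB\}_{g\in G}$ for some $B\in\mathcal B$; bounded sets are members of $\mathcal B$; a basis of $\mathcal B$ is a subfamily such that each member of $\mathcal B$ lies in a member of it. $G$ is locally bounded if for every bounded $B\subseteq G$ the subgroup $\langle B\rangle$ generated by $B$ is bounded. For $A\subseteq G$ and a cover $\mathcal U$, $st(A,\mathcal U)$ is the union of the members of $\mathcal U$ meeting $A$. $A$ is coarsely clopen if $st(A,\mathcal U)\cap st(G\setminus A,\mathcal U)$ is bounded for every uniformly bounded $\mathcal U$. An end of $G$ is a family of unbounded coarsely clopen subsets of $G$ maximal with respect to the property that all finite intersections of its members are unbounded. *)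

(* Defs.v *)
From Stdlib Require Import List.
Import ListNotations.
Set Implicit Arguments.

Record LargeScaleGroup := {
  carrier :> Type;
  mul : carrier -> carrier -> carrier;
  inv : carrier -> carrier;
  one : carrier;
  mulA : forall x y z, mul x (mul y z) = mul (mul x y) z;
  mul1g : forall x, mul one x = x;
  mulg1 : forall x, mul x one = x;
  mulVg : forall x, mul (inv x) x = one;
  mulgV : forall x, mul x (inv x) = one;
  bounded : (carrier -> Prop) -> Prop;
  born_cover : forall x, exists B, bounded B /\ B x;
  born_sub : forall A C, bounded A -> (forall x, C x -> A x) -> bounded C;
  born_union : forall A C, bounded A -> bounded C ->
      bounded (fun x => A x \/ C x);
  born_empty : bounded (fun _ => False);
  born_inv : forall A, bounded A -> bounded (fun x => exists a, A a /\ x = inv a);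
  born_mul : forall A C, bounded A -> bounded C ->
      bounded (fun x => exists a c, A a /\ C c /\ x = mul a c)
}.

Section Defs.
Variable G : LargeScaleGroup.

Definition subset (A B : G -> Prop) : Prop := forall x, A x -> B x.

(** A basis of the bornology; countable basis = indexed by nat. *)
Definition has_countable_basis : Prop :=
  exists b : nat -> (G -> Prop),
    (forall n, bounded G (b n)) /\
    (forall A, bounded G A -> exists n, subset A (b n)).

Definition is_subgroup (H : G -> Prop) : Prop :=
  H (one G) /\ (forall x y, H x -> H y -> H (mul G x y)) /\
  (forall x, H x -> H (inv G x)).

Definition gen_subgroup (B : G -> Prop) : G -> Prop :=
  fun x => forall H, is_subgroup H -> subset B H -> H x.

Definition locally_bounded : Prop :=
  forall B, bounded G B -> bounded G (gen_subgroup B).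

Definition unbounded_group : Prop := ~ bounded G (fun _ => True).

Definition is_cover (U : (G -> Prop) -> Prop) : Prop :=
  forall x, exists V, U V /\ V x.

Definition ltrans (g : G) (B : G -> Prop) : G -> Prop :=
  fun x => exists b, B b /\ x = mul G g b.

Definition uniformly_bounded (U : (G -> Prop) -> Prop) : Prop :=
  is_cover U /\
  exists B, bounded G B /\ forall V, U V -> exists g, subset V (ltrans g B).

Definition star (A : G -> Prop) (U : (G -> Prop) -> Prop) : G -> Prop :=
  fun x => exists V, U V /\ V x /\ exists a, V a /\ A a.

Definition coarsely_clopen (A : G -> Prop) : Prop :=
  forall U, uniformly_bounded U ->
    bounded G (fun x => star A U x /\ star (fun y => ~ A y) U x).

Definition list_inter (l : list (G -> Prop)) : G -> Prop :=
  fun x => Forall (fun A => A x) l.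

Definition good_family (E : (G -> Prop) -> Prop) : Prop :=
  (forall A, E A -> ~ bounded G A /\ coarsely_clopen A) /\
  (forall l, l <> [] -> Forall E l -> ~ bounded G (list_inter l)).

Definition is_end (E : (G -> Prop) -> Prop) : Prop :=
  good_family E /\
  forall E', good_family E' -> (forall A, E A -> E' A) -> forall A, E' A -> E A.

End Defs.

(* Main.v *)
Require Import Defs.
From Stdlib Require Import Arith List Classical ClassicalEpsilon Lia Cantor.
From mathcomp Require classical_sets.
Import ListNotations.
Arguments gen_subgroup {G}. Arguments is_subgroup {G}. Arguments subset {G}. Arguments coarsely_clopen {G}. Arguments list_inter {G}. Arguments good_family {G}. Arguments star {G}. Arguments uniformly_bounded {G}. Arguments ltrans {G}. Arguments is_cover {G}.

Section Z.
Variable G : LargeScaleGroup.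

Lemma good_anti (E E' : (G -> Prop) -> Prop) :
  good_family E' -> (forall A, E A -> E' A) -> good_family E.
Proof.
  intros [h1 h2] hs. split.
  - intros A hA; apply h1, hs, hA.
  - intros l hl hF. apply h2; auto. eapply Forall_impl; [|exact hF]. auto.
Qed.

Lemma chain_list (C : ((G -> Prop) -> Prop) -> Prop) (F : (G -> Prop) -> Prop) :
  classical_sets.total_on C classical_sets.subset ->
  forall l, Forall (fun A => (exists2 X, C X & X A) \/ F A) l ->
  Forall F l \/ exists X, C X /\ Forall (fun A => X A \/ F A) l.
Proof.
  intros htot l. induction l as [|a l IH]; intros hl.
  - left; constructor.
  - inversion hl as [|? ? ha hl']; subst.
    destruct (IH hl') as [h|[X [hX h]]]; destruct ha as [[Y hY hYa]|ha].
    + right. exists Y. split; [exact hY|]. constructor; [left; exact hYa|].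
      eapply Forall_impl; [|exact h]. intros; right; assumption.
    + left; constructor; assumption.
    + right. destruct (htot X Y hX hY) as [hXY|hYX].
      * exists Y. split; [exact hY|]. constructor; [left; exact hYa|].
        eapply Forall_impl; [|exact h]. intros A [hA|hA]; [left; apply hXY; exact hA|right; exact hA].
      * exists X. split; [exact hX|]. constructor; [left; apply hYX; exact hYa|exact h].
    + right. exists X. split; [exact hX|]. constructor; [right; exact ha|exact h].
Qed.

Lemma extend_end (F : (G -> Prop) -> Prop) : good_family F ->
  exists E, is_end G E /\ forall A, F A -> E A.
Proof.
  intros hF.
  pose (P := fun E : (G -> Prop) -> Prop => good_family (fun A => E A \/ F A)).
  destruct (@classical_sets.Zorn_bigcup (G -> Prop) P) as [E0 [hE0 hmax]].
  - intros C hCP htot. unfold P. split.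
    + intros A [[X hX hXA]|hA].
      * apply (hCP X hX). auto.
      * apply hF, hA.
    + intros l hl hall. destruct (chain_list C F htot l hall) as [h|[X [hX h]]].
      * apply hF; auto.
      * apply (hCP X hX); auto.
  - exists (fun A => E0 A \/ F A). split; [|auto]. split; [exact hE0|].
    intros E' hE' hsub A hA. apply NNPP; intro hn.
    apply (hmax E').
    + split.
      * intros B hB; apply hsub; auto.
      * intro hc. apply hn. left. apply hc, hA.
    + unfold P. apply good_anti with E'; auto. intros B [hB|hB]; auto.
Qed.

End Z.

Section S.
Variable G : LargeScaleGroup.

Lemma gen_sub_is (B : G -> Prop) : is_subgroup (gen_subgroup B).
Proof.
  unfold gen_subgroup; split; [|split].
  - intros H [h1 _] _; exact h1.
  - intros x y hx hy H hH hB. destruct hH as [h1 [h2 h3]].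
    apply h2; [apply hx|apply hy]; try split; auto.
  - intros x hx H hH hB. destruct hH as [h1 [h2 h3]].
    apply h3; apply hx; try split; auto.
Qed.

Lemma gen_sub_incl (B : G -> Prop) : subset B (gen_subgroup B).
Proof. intros x hx H _ hB; apply hB, hx. Qed.

Lemma gen_sub_mono (B C : G -> Prop) : subset B C -> subset (gen_subgroup B) (gen_subgroup C).
Proof. intros hBC x hx H hH hC. apply hx; auto. intros y hy; apply hC, hBC, hy. Qed.

Lemma mul_cancel (z h : G) : mul G (mul G z h) (inv G h) = z.
Proof. rewrite <- mulA, mulgV, mulg1. reflexivity. Qed.

Lemma mul_shift (g b1 b2 : G) :
  mul G (mul G g b1) (mul G (inv G b1) b2) = mul G g b2.
Proof.
  rewrite <- mulA. f_equal. rewrite mulA, mulgV, mul1g. reflexivity.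
Qed.

Variable b : nat -> (G -> Prop).
Hypothesis hb1 : forall n, bounded G (b n).
Hypothesis hb2 : forall A, bounded G A -> exists n, subset A (b n).
Hypothesis Hunb : unbounded_group G.
Hypothesis Hlb : locally_bounded G.

Definition D n : G -> Prop := fun x => exists i, i <= n /\ b i x.

Lemma D_bounded n : bounded G (D n).
Proof.
  induction n.
  - apply born_sub with (b 0); auto. intros x [i [hi hx]].
    assert (i = 0) by lia; subst; auto.
  - apply born_sub with (fun x => D n x \/ b (S n) x).
    + apply born_union; auto.
    + intros x [i [hi hx]]. destruct (Nat.eq_dec i (S n)).
      * subst; right; auto.
      * left; exists i; split; auto; lia.
Qed.

Definition L n := gen_subgroup (D n).

Lemma L_bounded n : bounded G (L n).
Proof. apply Hlb, D_bounded. Qed.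

Lemma L_mono {n m} : n <= m -> subset (L n) (L m).
Proof.
  intros h. apply gen_sub_mono. intros x [i [hi hx]]. exists i; split; auto; lia.
Qed.

Lemma b_L n : subset (b n) (L n).
Proof. intros x hx. apply gen_sub_incl. exists n; split; auto. Qed.

Lemma bounded_in_L {A} : bounded G A -> exists n, subset A (L n).
Proof.
  intros hA. destruct (hb2 _ hA) as [n hn]. exists n. intros x hx; apply b_L, hn, hx.
Qed.

Lemma step_ex n : exists n', n < n' /\ exists x, L n' x /\ ~ L n x.
Proof.
  assert (exists x, ~ L n x).
  { apply NNPP; intro hc. apply Hunb. apply born_sub with (L n).
    - apply L_bounded.
    - intros x _. apply NNPP; intro hx; apply hc; exists x; auto. }
  destruct H as [x hx].
  destruct (born_cover G x) as [B [hB hxB]].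
  destruct (bounded_in_L hB) as [k hk].
  exists (S (n + k)). split; [lia|]. exists x; split; auto.
  apply (L_mono (n:=k)); [lia|auto].
Qed.

Definition gstep (n : nat) : nat := proj1_sig (constructive_indefinite_description _ (step_ex n)).
Lemma gstep_spec n : n < gstep n /\ exists x, L (gstep n) x /\ ~ L n x.
Proof. unfold gstep. destruct (constructive_indefinite_description _ _); simpl; auto. Qed.

Fixpoint c (j : nat) : nat := match j with 0 => 0 | S j => gstep (c j) end.

Lemma c_ge j : j <= c j.
Proof. induction j; simpl; [lia|]. pose proof (proj1 (gstep_spec (c j))); lia. Qed.

Lemma c_mono j k : j <= k -> c j <= c k.
Proof.
  induction 1; [lia|]. simpl. pose proof (proj1 (gstep_spec (c m))); lia.
Qed.

Definition M j := L (c j).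

Lemma M_mono {j k} : j <= k -> subset (M j) (M k).
Proof. intros h; apply L_mono, c_mono, h. Qed.

Lemma M_sub j : is_subgroup (M j).
Proof. apply gen_sub_is. Qed.

Lemma M_bounded j : bounded G (M j).
Proof. apply L_bounded. Qed.

Lemma bounded_in_M {A} : bounded G A -> exists n, subset A (M n).
Proof.
  intros hA. destruct (bounded_in_L hA) as [n hn]. exists n.
  intros x hx. apply (L_mono (c_ge n)), hn, hx.
Qed.

Lemma M_cover x : exists k, M k x.
Proof.
  destruct (born_cover G x) as [B [hB hxB]].
  destruct (bounded_in_M hB) as [k hk]. exists k; auto.
Qed.

Definition trans j x := M (S j) x /\ ~ M j x.

Lemma trans_ex j : exists x, trans j x.
Proof.
  destruct (proj2 (gstep_spec (c j))) as [x hx]. exists x. exact hx.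
Qed.

Lemma trans_uniq j k x : trans j x -> trans k x -> j = k.
Proof.
  intros [h1 h2] [h3 h4]. destruct (Nat.lt_trichotomy j k) as [h|[h|h]]; auto.
  - exfalso; apply h4. apply (M_mono (j:=S j)); [lia|auto].
  - exfalso; apply h2. apply (M_mono (j:=S k)); [lia|auto].
Qed.

Lemma trans_of_not {m x} : ~ M m x -> exists j, m <= j /\ trans j x.
Proof.
  intros hm. destruct (M_cover x) as [k hk]. revert hk. induction k; intros hk.
  - exfalso; apply hm. apply (M_mono (j:=0)); [lia|auto].
  - destruct (classic (M k x)) as [h|h]; auto.
    exists k. split; [|split; auto].
    destruct (le_lt_dec m k); auto. exfalso; apply hm.
    apply (M_mono (j:=S k)); [lia|auto].
Qed.

Lemma band j m z h : m <= j -> M m h -> trans j z -> trans j (mul G z h).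
Proof.
  intros hmj hh [h1 h2]. destruct (M_sub (S j)) as [_ [s2 s3]].
  destruct (M_sub j) as [_ [t2 t3]]. split.
  - apply s2; auto. apply (M_mono (j:=m)); [lia|auto].
  - intro hc. apply h2. rewrite <- (mul_cancel z h). apply t2; auto.
    apply t3. apply (M_mono (j:=m)); [lia|auto].
Qed.

Definition Aset (i : nat) : G -> Prop := fun x => exists j, fst (of_nat j) = i /\ trans j x.

Lemma Aset_disj i k x : Aset i x -> Aset k x -> i = k.
Proof.
  intros [j [hj tj]] [j' [hj' tj']]. rewrite <- hj, <- hj'. f_equal. f_equal.
  eapply trans_uniq; eauto.
Qed.

Lemma Aset_unb i : ~ bounded G (Aset i).
Proof.
  intros hb. destruct (bounded_in_M hb) as [n hn].
  destruct (trans_ex (to_nat (i, n))) as [x hx].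
  assert (hA : Aset i x). { exists (to_nat (i, n)). rewrite cancel_of_to. auto. }
  apply hn in hA. destruct hx as [_ hx]. apply hx.
  apply (M_mono (j:=n)); auto. pose proof (to_nat_non_decreasing i n). lia.
Qed.

Lemma Aset_cc i : coarsely_clopen (Aset i).
Proof.
  intros U [hU [B [hB hUB]]].
  destruct (bounded_in_M hB) as [m hm].
  apply born_sub with (M m); [apply M_bounded|].
  intros x [[V [hV [hxV [a [haV haA]]]]] [V' [hV' [hxV' [a' [haV' haA']]]]]].
  apply NNPP; intro hxm.
  destruct (trans_of_not hxm) as [j [hmj hj]].
  assert (key : forall W y, U W -> W x -> W y -> trans j y).
  { intros W y hW hWx hWy. destruct (hUB W hW) as [g hg].
    destruct (hg x hWx) as [b1 [hb1' ->]]. destruct (hg y hWy) as [b2 [hb2' ->]].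
    rewrite <- (mul_shift g b1 b2). apply band with m; auto.
    destruct (M_sub m) as [_ [s2 s3]]. apply s2; [apply s3|]; apply hm; auto. }
  pose proof (key V a hV hxV haV) as ta.
  pose proof (key V' a' hV' hxV' haV') as ta'.
  destruct haA as [j0 [hj0 tj0]].
  apply haA'. exists j. split; auto.
  rewrite <- hj0. f_equal. f_equal. apply trans_uniq with a; auto.
Qed.

Lemma main_sec : exists f : nat -> ((G -> Prop) -> Prop),
    (forall n, @is_end G (f n)) /\ (forall m n, f m = f n -> m = n).
Proof.
  assert (hex : forall i, exists E, is_end G E /\ E (Aset i)).
  { intro i. destruct (@extend_end G (fun A => A = Aset i)) as [E [hE hFE]].
    - split.
      + intros A ->. split; [apply Aset_unb|apply Aset_cc].
      + intros l hl hall hb. apply (Aset_unb i). apply born_sub with (list_inter l); auto.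
        intros x hx. unfold list_inter. rewrite Forall_forall in *.
        intros A hA. rewrite (hall A hA). exact hx.
    - exists E. split; auto. }
  exists (fun i => proj1_sig (constructive_indefinite_description _ (hex i))).
  split.
  - intro n. exact (proj1 (proj2_sig (constructive_indefinite_description _ (hex n)))).
  - intros m n hmn. apply NNPP; intro hne.
    pose proof (proj2_sig (constructive_indefinite_description _ (hex m))) as [hE hEm].
    pose proof (proj2_sig (constructive_indefinite_description _ (hex n))) as [_ hEn].
    simpl in hmn. rewrite <- hmn in hEn.
    set (E := proj1_sig (constructive_indefinite_description _ (hex m))) in *.
    destruct hE as [[_ h2] _].
    apply (h2 [Aset m; Aset n]); [discriminate| repeat constructor; auto |].
    apply born_sub with (fun _ => False); [apply born_empty|].
    intros x hx. unfold list_inter in hx. inversion hx as [|? ? h1 hx']; subst.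
    inversion hx' as [|? ? h3 _]; subst. apply hne. eapply Aset_disj; eauto.
Qed.

End S.

Theorem proposition9p2 (G : LargeScaleGroup) :
  has_countable_basis G -> unbounded_group G -> locally_bounded G ->
  exists f : nat -> ((G -> Prop) -> Prop),
    (forall n, @is_end G (f n)) /\ (forall m n, f m = f n -> m = n).
Proof.
  intros [b [hb1 hb2]] hU hL. exact (@main_sec G b hb1 hb2 hU hL).
Qed.
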